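(* $\displaystyle\liminf_{k\to\infty}\frac{\Gamma(k)}{k}=\frac32.$
   Context: The Thue–Morse word is $\mathbf t=\mathbf t_1\mathbf t_2\cdots$ where $\mathbf t_i\in\{0,1\}$ has the parity of the number of $1$'s in the binary expansion of $i-1$. For positive integers $\alpha\le\beta$, $\langle\alpha,\beta\rangle=\mathbf t_\alpha\cdots\mathbf t_\beta$. A $k$-anti-power is a word $w_1\cdots w_k$ with $w_1,\dots,w_k$ pairwise distinct words of equal length. $\mathcal F(k)$ is the set of odd positive integers $m$ such that $\langle 1,km\rangle$ is a $k$-anti-power. For $k\ge3$, $\Gamma(k)=\sup\big((2\mathbb Z^+-1)\setminus\mathcal F(k)\big)$, which is a finite odd positive integer. *)

(* Defs.v *)
From HB Require Import structures.
From mathcomp Require Import all_boot all_order all_algebra.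
Set Implicit Arguments. Unset Strict Implicit. Unset Printing Implicit Defensive.
Import Order.TTheory GRing.Theory Num.Theory.

(* number of 1's in the binary expansion of n (fuel-based recursion; fuel n suffices) *)
Fixpoint popcount_fuel (fuel n : nat) : nat :=
  match fuel with
  | 0 => 0
  | f.+1 => odd n + popcount_fuel f n./2
  end.
Definition popcount (n : nat) : nat := popcount_fuel n n.

(* Thue-Morse word, 1-indexed: t_i = parity of popcount (i-1) *)
Definition tm (i : nat) : bool := odd (popcount i.-1).

Definition tm_factor (alpha beta : nat) : seq bool :=
  [seq tm i | i <- iota alpha (beta.+1 - alpha)].

Definition anti_power (k : nat) (w : seq bool) : Prop :=
  exists ws : seq (seq bool),
    [/\ size ws = k, flatten ws = w,
        all (fun u => size u == size (head [::] ws)) ws & uniq ws].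

Definition inF (k m : nat) : Prop :=
  odd m /\ 0 < m /\ anti_power k (tm_factor 1 (k * m)).

(* m is an odd positive integer not in F(k); Gamma(k) is the sup of these *)
Definition bad (k m : nat) : Prop := odd m /\ 0 < m /\ ~ inF k m.

(* Main.v *)
Require Import Defs.
From HB Require Import structures.
From mathcomp Require Import all_boot all_order all_algebra.
From mathcomp Require Import zify ring lra.
Import Order.TTheory GRing.Theory Num.Theory.

Lemma pf0 g : popcount_fuel g 0 = 0.
Proof. by elim: g => //= g ->. Qed.

Lemma pf_stab f g n : n <= f -> n <= g -> popcount_fuel f n = popcount_fuel g n.
Proof.
elim: f g n => [|f IH] [|g] n hf hg /=.
- by [].
- have -> : n = 0 by lia. by rewrite pf0.
- have -> : n = 0 by lia. by rewrite pf0.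
- congr (_ + _); apply: IH; lia.
Qed.

Lemma pc_rec n : popcount n = odd n + popcount n./2.
Proof.
case: n => [|n] //. rewrite /popcount /=. congr (_ + _).
apply: pf_stab; lia.
Qed.

Definition t0 n := odd (popcount n).

Lemma t0_rec n : t0 n = odd n (+) t0 n./2.
Proof. by rewrite /t0 pc_rec oddD oddb. Qed.

Lemma t0_dec b q s : s < 2 ^ b -> t0 (2 ^ b * q + s) = t0 q (+) t0 s.
Proof.
elim: b q s => [|b IH] q s hs.
  have -> : s = 0 by rewrite expn0 in hs; lia.
  by rewrite expn0 mul1n addn0 /t0 addbF.
rewrite t0_rec [t0 s]t0_rec.
have e : 2 ^ b.+1 * q + s = odd s + (2 ^ b * q + s./2).*2.
  rewrite -{1}(odd_double_half s) expnS -!mul2n; ring.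
rewrite e half_bit_double IH; last first.
  rewrite expnS in hs; lia.
rewrite oddD oddb odd_double addbF.
by case: (odd s); case: (t0 q); case: (t0 s./2).
Qed.

Lemma t0_even n : t0 (2 * n) = t0 n.
Proof. by have := t0_dec 1 n 0 isT; rewrite expn1 addn0 addbF. Qed.

Lemma t0_odd n : t0 (2 * n + 1) = ~~ t0 n.
Proof. by have := t0_dec 1 n 1 isT; rewrite expn1 => ->; rewrite addbT. Qed.

Lemma t0_pow a : t0 (2 ^ a) = true.
Proof. by have := t0_dec a 1 0 (expn_gt0 2 a); rewrite muln1 addn0 addbF. Qed.

Lemma t0_pow1 a : t0 (2 ^ a - 1) = odd a.
Proof.
elim: a => [|a IH] //.
have -> : 2 ^ a.+1 - 1 = 2 * (2 ^ a - 1) + 1.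
  rewrite expnS; have := expn_gt0 2 a; lia.
by rewrite t0_odd IH.
Qed.


Lemma t0_half n : t0 n = odd n (+) t0 n./2.
Proof. exact: t0_rec. Qed.

Lemma no_cube b : ~ (t0 b = t0 b.+1 /\ t0 b.+1 = t0 b.+2).
Proof.
have [c [->|->]] : exists c, b = 2 * c \/ b = 2 * c + 1.
  exists b./2. rewrite -{1 3}(odd_double_half b) -mul2n. case: (odd b) => /=; [right|left]; lia.
- case=> h1 _; move: h1; rewrite -(addn1 (2 * c)) t0_odd t0_even. by case: (t0 c).
- case=> _ h2; move: h2. have -> : (2 * c + 1).+2 = 2 * c.+1 + 1 by lia.
  have -> : (2 * c + 1).+1 = 2 * c.+1 by lia.
  rewrite t0_odd t0_even. by case: (t0 _).
Qed.

Lemma t0_cong x x' y y' : x = x' -> y = y' -> t0 x' = t0 y' -> t0 x = t0 y.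
Proof. by move=> -> ->. Qed.

Lemma len4_even a y : odd y -> ~ (forall c, c < 4 -> t0 (2 * a + c) = t0 (y + c)).
Proof.
move=> oy h. have [b eb] : exists b, y = 2 * b + 1.
  exists y./2. rewrite -{1}(odd_double_half y) oy /= -mul2n. lia.
have h0 : t0 (2 * a) = t0 (2 * b + 1) by have := h 0 isT; rewrite eb !addn0.
have h1 : t0 (2 * a + 1) = t0 (2 * b.+1) by apply: (@t0_cong _ _ _ _ _ _ (h 1 isT)); rewrite ?eb; lia.
have h2 : t0 (2 * a.+1) = t0 (2 * b.+1 + 1) by apply: (@t0_cong _ _ _ _ _ _ (h 2 isT)); rewrite ?eb; lia.
have h3 : t0 (2 * a.+1 + 1) = t0 (2 * b.+2) by apply: (@t0_cong _ _ _ _ _ _ (h 3 isT)); rewrite ?eb; lia.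
rewrite !t0_even !t0_odd in h0 h1 h2 h3.
apply: (no_cube b); split.
- move: h0 h1; by case: (t0 a); case: (t0 b); case: (t0 b.+1).
- move: h2 h3; by case: (t0 a.+1); case: (t0 b.+1); case: (t0 b.+2).
Qed.


Lemma blk_eq b q q' r m L : r < 2 ^ b -> r + m <= L.+1 * 2 ^ b ->
  (forall c, c <= L -> t0 (q + c) = t0 (q' + c)) ->
  forall x, x < m -> t0 (2 ^ b * q + r + x) = t0 (2 ^ b * q' + r + x).
Proof.
move=> hr hm hc x hx.
have hD : 0 < 2 ^ b := expn_gt0 2 b.
set c := (r + x) %/ 2 ^ b. set s := (r + x) %% 2 ^ b.
have e : r + x = c * 2 ^ b + s := divn_eq _ _.
have hs : s < 2 ^ b := ltn_pmod _ hD.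
have hcL : c <= L.
  have : c < L.+1 by rewrite ltn_divLR //; lia.
  lia.
have e1 : 2 ^ b * q + r + x = 2 ^ b * (q + c) + s by rewrite -addnA e mulnDr addnA (mulnC c).
have e2 : 2 ^ b * q' + r + x = 2 ^ b * (q' + c) + s by rewrite -addnA e mulnDr addnA (mulnC c).
by rewrite e1 e2 !t0_dec // hc.
Qed.

Definition blk m i := [seq t0 x | x <- iota (i * m) m].
Definition blocks k m := [seq blk m i | i <- iota 0 k].

Lemma size_blk m i : size (blk m i) = m.
Proof. by rewrite size_map size_iota. Qed.

Lemma tmf k m : tm_factor 1 (k * m) = flatten (blocks k m).
Proof.
rewrite /tm_factor subSS subn0.
have -> : [seq tm i | i <- iota 1 (k * m)] = [seq t0 i | i <- iota 0 (k * m)].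
  have -> : iota 1 (k * m) = iota (1 + 0) (k * m) by []. rewrite iotaDl -map_comp. by apply: eq_map => i /=; rewrite add1n.
elim: k => [|k IH]; first by [].
rewrite mulSnr iotaD map_cat IH /blocks -addn1 iotaD map_cat flatten_cat /=.
by rewrite cats0 add0n.
Qed.

Lemma blkE m i j : (forall x, x < m -> t0 (i * m + x) = t0 (j * m + x)) -> blk m i = blk m j.
Proof.
move=> h. rewrite /blk.
have -> : iota (i * m) m = iota (i * m + 0) m by rewrite addn0.
have -> : iota (j * m) m = iota (j * m + 0) m by rewrite addn0.
rewrite !iotaDl -!map_comp.
apply/eq_in_map => x; rewrite mem_iota add0n => /andP[_ hx]. exact: h.
Qed.

Lemma blkE' m i j : blk m i = blk m j -> forall x, x < m -> t0 (i * m + x) = t0 (j * m + x).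
Proof.
move=> h x hx. have := congr1 (fun s => nth false s x) h.
by rewrite /blk !(nth_map 0) ?size_iota // !nth_iota.
Qed.

Lemma nth_flat (T : Type) m (ws : seq (seq T)) : all (fun u => size u == m) ws ->
  forall i, i < size ws -> nth [::] ws i = take m (drop (i * m) (flatten ws)).
Proof.
elim: ws => [|u ws IH] //= /andP[/eqP hu ha] [|i] hi /=.
  by rewrite drop0 take_size_cat.
rewrite mulSnr -drop_drop drop_size_cat //. exact: IH.
Qed.

Lemma anti_blocks k m : 0 < k -> (forall i j, i < k -> j < k -> blk m i = blk m j -> i = j) ->
  anti_power k (flatten (blocks k m)).
Proof.
move=> hk hinj. exists (blocks k m); split.
- by rewrite size_map size_iota.
- by [].
- have -> : size (head [::] (blocks k m)) = m.
    by case: k hk hinj => [|k] // _ _; rewrite /blocks /= size_blk.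
  apply/allP => u /mapP [i _ ->]. by rewrite size_blk.
- rewrite map_inj_in_uniq ?iota_uniq // => i j; rewrite !mem_iota !add0n => /andP[_ hi] /andP[_ hj].
  exact: hinj.
Qed.

Lemma not_anti k m i j : 0 < m -> i < j -> j < k -> blk m i = blk m j ->
  ~ anti_power k (flatten (blocks k m)).
Proof.
move=> hm hij hjk he [ws [hs hf ha hu]].
set s := size (head [::] ws) in ha.
have hsz : size (flatten ws) = k * s.
  rewrite size_flatten /shape.
  have : all (pred1 s) (map size ws) by rewrite all_map.
  move/all_pred1P => ->. by rewrite size_map hs sumn_nseq mulnC.
have hsm : s = m.
  have : size (flatten (blocks k m)) = k * m by rewrite -tmf /tm_factor size_map size_iota; lia.
  rewrite -hf hsz => /eqP. rewrite eqn_pmul2l; [by move/eqP| lia].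
rewrite hsm in ha.
have hb : all (fun u => size u == m) (blocks k m).
  apply/allP => u /mapP [l _ ->]. by rewrite size_blk.
have key : forall l, l < k -> nth [::] ws l = blk m l.
  move=> l hl. rewrite (@nth_flat _ _ _ ha) ?hs // hf -(@nth_flat _ _ _ hb) ?size_map ?size_iota //.
  by rewrite (nth_map 0) ?size_iota // nth_iota.
have := nth_uniq [::] (_ : i < size ws) (_ : j < size ws) hu.
by rewrite !key ?he ?eqxx; try lia.
Qed.


Lemma two_adic d : 0 < d -> exists e u, odd u /\ d = 2 ^ e * u.
Proof.
elim: d {-2}d (leqnn d) => [|n IH] d hd hpos; first lia.
case hod: (odd d); first by exists 0, d; rewrite expn0 mul1n.
have e : d = 2 * d./2 by rewrite -{1}(odd_double_half d) hod /= -mul2n add0n.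
have [e' [u [hu he]]] : exists e u, odd u /\ d./2 = 2 ^ e * u by apply: IH; lia.
exists e'.+1, u; split => //. rewrite e he expnS; ring.
Qed.

Lemma distinct n m i j : odd m -> 3 * 2 ^ n < m -> i < j -> j < 2 ^ n.+1 ->
  blk m i = blk m j -> False.
Proof.
move=> hm hmn hij hj /blkE' he.
have hji : 0 < j - i by lia.
have [e [u [hu hd]]] := @two_adic _ hji.
have hD : 0 < 2 ^ e := expn_gt0 2 e.
have hen : 2 ^ e <= 2 ^ n.
  have h1 : 2 ^ e < 2 ^ n.+1.
    have hji2 : j - i < 2 ^ n.+1 by lia.
    apply: (leq_ltn_trans _ hji2). rewrite hd. apply: leq_pmulr. by move: hu; case: (u).
  rewrite ltn_exp2l // in h1. by rewrite leq_exp2l.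
set P := i * m. set q := P %/ 2 ^ e. set r := P %% 2 ^ e.
have hr : r < 2 ^ e := ltn_pmod _ hD.
have eP : P = 2 ^ e * q + r by rewrite /q /r mulnC -divn_eq.
have eQ : j * m = 2 ^ e * (q + u * m) + r.
  have -> : j * m = P + (j - i) * m by rewrite /P -mulnDl; congr (_ * _); lia.
  by rewrite eP hd mulnDr -mulnA; ring.
have key : forall c, c < 4 -> t0 (q + c) = t0 (q + u * m + c).
  move=> c hc.
  have hx : c * 2 ^ e < m.
    have : c * 2 ^ e <= 3 * 2 ^ n by apply: leq_mul; lia.
    lia.
  have := he (c * 2 ^ e) hx.
  have -> : P + c * 2 ^ e = 2 ^ e * (q + c) + r by rewrite eP; ring.
  have -> : j * m + c * 2 ^ e = 2 ^ e * (q + u * m + c) + r by rewrite eQ; ring.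
  rewrite !t0_dec //. 
  move/(congr1 (addb^~ (t0 r))) => /=. by rewrite -!addbA addbb !addbF.
have hoq : odd (q + u * m) = ~~ odd q by rewrite oddD oddM hu hm addbT.
case hq: (odd q).
- have [a ea] : exists a, q + u * m = 2 * a.
    exists (q + u * m)./2. rewrite -{1}(odd_double_half (q + u * m)) hoq hq /= -mul2n. lia.
  apply: (@len4_even a q hq) => c hc. by rewrite -ea key.
- have [a ea] : exists a, q = 2 * a.
    exists q./2. rewrite -{1}(odd_double_half q) hq /= -mul2n. lia.
  apply: (@len4_even a (q + u * m) _) => [|c hc]; first by rewrite hoq hq.
  by rewrite -ea key.
Qed.

Lemma inF_pow n m : odd m -> 3 * 2 ^ n < m -> inF (2 ^ n.+1) m.
Proof.
move=> hm hmn. split => //; split; first by case: (m) hm.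
rewrite tmf. apply: anti_blocks; first exact: expn_gt0.
move=> i j hi hj he. case: (ltngtP i j) => // hij.
- by case: (@distinct _ _ _ _ hm hmn hij hj he).
- by case: (@distinct _ _ _ _ hm hmn hij hi (esym he)).
Qed.

Lemma bad_of k m i j : odd m -> i < j -> j < k -> blk m i = blk m j -> bad k m.
Proof.
move=> hm hij hjk he. have hm0 : 0 < m by case: (m) hm.
split => //; split => // [[_ [_]]]. rewrite tmf. exact: (@not_anti _ _ _ _ hm0 hij hjk he).
Qed.


Lemma badF1 a k : 2 ^ (a + 3) + 2 < k -> bad k (2 * 2 ^ (a + 3) - 1).
Proof.
move=> hk. set N := 2 ^ (a + 3). set A := 2 ^ a.
have eN : N = 8 * A by rewrite /N /A expnD mulnC.
have hA : 0 < A := expn_gt0 2 a.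
set m := 2 * N - 1.
have hm : odd m.
  rewrite /m eN. have -> : 2 * (8 * A) - 1 = 2 * (8 * A - 1) + 1 by lia.
  by rewrite oddD oddM.
apply: (@bad_of _ _ 2 (N + 2) hm) => //; first lia.
apply: blkE => x hx.
have -> : 2 * m + x = 2 ^ (a + 3) * 3 + (N - 2) + x by rewrite -/N /m; lia.
have -> : (N + 2) * m + x = 2 ^ (a + 3) * (3 + m) + (N - 2) + x by rewrite -/N /m; clear -eN hA; nia.
apply: (@blk_eq _ _ _ _ m 2 _ _ _ _ hx); first (by rewrite -/N; lia); first (by rewrite -/N /m; lia).
have e16 : forall c, 3 + m + c = 2 ^ 4 * A + (2 + c) by move=> c; rewrite /m eN; lia.
move=> c hc. rewrite e16 t0_dec ?t0_pow; last by lia.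
by case: c hc => [|[|[|c]]].
Qed.

Lemma badF2e a k i : odd a -> 3 * i + 1 = 2 ^ (a + 3) -> i + 2 ^ (a + 3) < k ->
  bad k (3 * 2 ^ (a + 3) - 3).
Proof.
move=> ha hi hk. set N := 2 ^ (a + 3). set A := 2 ^ a. rewrite -/N in hi hk.
have eN : N = 8 * A by rewrite /N /A expnD mulnC.
have hA : 0 < A := expn_gt0 2 a.
set m := 3 * N - 3.
have hm : odd m.
  rewrite /m eN. have -> : 3 * (8 * A) - 3 = 2 * (12 * A - 2) + 1 by lia.
  by rewrite oddD oddM.
apply: (@bad_of _ _ i (i + N) hm) => //; first lia.
apply: blkE => x hx.
have -> : i * m + x = 2 ^ (a + 3) * (N - 2) + 1 + x by rewrite -/N /m; clear -eN hA hi; nia.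
have -> : (i + N) * m + x = 2 ^ (a + 3) * (4 * N - 5) + 1 + x by rewrite -/N /m; clear -eN hA hi; nia.
apply: (@blk_eq _ _ _ _ m 2 _ _ _ _ hx); first (by rewrite -/N; lia); first (by rewrite -/N /m; lia).
have tA : t0 (A - 1) = true by rewrite /A t0_pow1.
move=> c hc. case: c hc => [|[|[|c]]] // _.
- have -> : N - 2 + 0 = 2 ^ 3 * (A - 1) + 6 by rewrite eN; lia.
  have -> : 4 * N - 5 + 0 = 2 ^ 5 * (A - 1) + 27 by rewrite eN; lia.
  by rewrite (@t0_dec 3 (A - 1) 6) // (@t0_dec 5 (A - 1) 27) // tA.
- have -> : N - 2 + 1 = 2 ^ 3 * (A - 1) + 7 by rewrite eN; lia.
  have -> : 4 * N - 5 + 1 = 2 ^ 5 * (A - 1) + 28 by rewrite eN; lia.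
  by rewrite (@t0_dec 3 (A - 1) 7) // (@t0_dec 5 (A - 1) 28) // tA.
- have -> : N - 2 + 2 = N by rewrite eN; lia.
  have -> : 4 * N - 5 + 2 = 2 ^ 5 * (A - 1) + 29 by rewrite eN; lia.
  by rewrite (@t0_dec 5 (A - 1) 29) // tA /N t0_pow.
Qed.

Lemma badF2o a k i : 3 * i + 2 = 2 ^ (a + 3) -> i + 2 ^ (a + 3) < k ->
  bad k (3 * 2 ^ (a + 3) - 9).
Proof.
move=> hi hk. set N := 2 ^ (a + 3). set A := 2 ^ a. rewrite -/N in hi hk.
have eN : N = 8 * A by rewrite /N /A expnD mulnC.
have hA : 0 < A := expn_gt0 2 a.
set m := 3 * N - 9.
have hm : odd m.
  rewrite /m eN. have -> : 3 * (8 * A) - 9 = 2 * (12 * A - 5) + 1 by lia.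
  by rewrite oddD oddM.
apply: (@bad_of _ _ i (i + N) hm) => //; first lia.
apply: blkE => x hx.
have -> : i * m + x = 2 ^ (a + 3) * (N - 5) + 6 + x by rewrite -/N /m; clear -eN hA hi; nia.
have -> : (i + N) * m + x = 2 ^ (a + 3) * (4 * N - 14) + 6 + x by rewrite -/N /m; clear -eN hA hi; nia.
apply: (@blk_eq _ _ _ _ m 2 _ _ _ _ hx); first (by rewrite -/N; lia); first (by rewrite -/N /m; lia).
move=> c hc. case: c hc => [|[|[|c]]] // _.
- have -> : N - 5 + 0 = 2 ^ 3 * (A - 1) + 3 by rewrite eN; lia.
  have -> : 4 * N - 14 + 0 = 2 ^ 5 * (A - 1) + 18 by rewrite eN; lia.
  by rewrite (@t0_dec 3 (A - 1) 3) // (@t0_dec 5 (A - 1) 18).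
- have -> : N - 5 + 1 = 2 ^ 3 * (A - 1) + 4 by rewrite eN; lia.
  have -> : 4 * N - 14 + 1 = 2 ^ 5 * (A - 1) + 19 by rewrite eN; lia.
  by rewrite (@t0_dec 3 (A - 1) 4) // (@t0_dec 5 (A - 1) 19).
- have -> : N - 5 + 2 = 2 ^ 3 * (A - 1) + 5 by rewrite eN; lia.
  have -> : 4 * N - 14 + 2 = 2 ^ 5 * (A - 1) + 20 by rewrite eN; lia.
  by rewrite (@t0_dec 3 (A - 1) 5) // (@t0_dec 5 (A - 1) 20).
Qed.


Lemma pow2mod3 a : 2 ^ a %% 3 = (if odd a then 2 else 1).
Proof.
elim: a => [|a IH] //. rewrite expnS -modnMmr IH /=. by case: (odd a).
Qed.

Lemma exists_bad k : 11 <= k -> exists m, bad k m /\ 3 * k <= 2 * m + 24.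
Proof.
move=> hk. set u := (k - 3) %/ 8.
have hu : 0 < u by rewrite /u divn_gt0 //; lia.
set a := trunc_log 2 u.
have h1 : 2 ^ a <= u := trunc_logP (isT : 1 < 2) hu.
have h2 : u < 2 ^ a.+1 := trunc_log_ltn u (isT : 1 < 2).
have hu1 : 8 * u <= k - 3 by rewrite /u mulnC leq_trunc_div.
have hu2 : k - 3 < 8 * u.+1 by rewrite /u mulnC -ltn_divLR //.
set N := 2 ^ (a + 3).
have eN : N = 8 * 2 ^ a by rewrite /N expnD mulnC.
rewrite expnS in h2.
have hN1 : N + 3 <= k by lia.
have hN2 : k < 2 * N + 3 by lia.
set i := N %/ 3.
have ediv : N = i * 3 + N %% 3 := divn_eq N 3.
have hmod : N %% 3 = (if odd a then 1 else 2).
  rewrite /N pow2mod3 oddD /=. by case: (odd a).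
case: (ltnP (i + N) k) => hik.
- case hoa: (odd a) hmod => hmod.
  + exists (3 * 2 ^ (a + 3) - 3); split.
      apply: (@badF2e a k i hoa) => //; rewrite -/N; lia.
    rewrite -/N; lia.
  + exists (3 * 2 ^ (a + 3) - 9); split.
      apply: (@badF2o a k i) => //; rewrite -/N; lia.
    rewrite -/N; lia.
- exists (2 * 2 ^ (a + 3) - 1); split.
    apply: badF1; rewrite -/N; lia.
  rewrite -/N. have : i * 3 <= N by lia. lia.
Qed.

Local Open Scope ring_scope.

Theorem theorem2 :
  (forall eps : rat, 0 < eps ->
     exists K : nat, forall k : nat, (K <= k)%N ->
       exists m : nat, bad k m /\ 3%:R / 2%:R - eps < m%:R / k%:R)
  /\
  (forall eps : rat, 0 < eps ->
     forall K : nat, exists k : nat, (K <= k)%N /\ (0 < k)%N /\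
       forall m : nat, bad k m -> m%:R / k%:R <= 3%:R / 2%:R + eps).
Proof.
split.
- move=> eps he. exists (Num.Def.archi_bound (12 / eps) + 11)%N => k hk.
  have hk11 : (11 <= k)%N by lia.
  have [m [hb hm]] := @exists_bad k hk11.
  exists m; split => //.
  have hk0 : (0 : rat) < k%:R by rewrite ltr0n; lia.
  have hb0 : 12 / eps < (Num.Def.archi_bound (12 / eps))%:R.
    apply: archi_boundP. by rewrite divr_ge0 // ltW.
  have hkK : (Num.Def.archi_bound (12 / eps))%:R <= k%:R :> rat by rewrite ler_nat; lia.
  have h12 : 12 < k%:R * eps.
    rewrite -ltr_pdivrMr //. exact: lt_le_trans hb0 hkK.
  have h3 : 3 * k%:R <= 2 * m%:R + 24 :> rat.
    have : (3 * k <= 2 * m + 24)%N := hm.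
    by rewrite -(ler_nat rat) natrD !natrM.
  rewrite ltr_pdivlMr // mulrBl. lra.
- move=> eps he K. exists (2 ^ K.+1)%N; split; first by have := ltn_expl K.+1 (isT : (1 < 2)%N); lia.
  split; first exact: expn_gt0.
  move=> m [hodd [hm0 hnF]].
  have hmK : (m <= 3 * 2 ^ K)%N.
    rewrite leqNgt; apply/negP => h. exact: hnF (@inF_pow K m hodd h).
  have hk0 : (0 : rat) < (2 ^ K.+1)%:R by rewrite ltr0n expn_gt0.
  rewrite ler_pdivrMr //.
  have h2 : 2 * m%:R <= 3 * (2 ^ K.+1)%:R :> rat.
    have : (2 * m <= 3 * 2 ^ K.+1)%N by rewrite expnS; lia.
    by rewrite -(ler_nat rat) !natrM.
  have hek : 0 <= eps * (2 ^ K.+1)%:R by rewrite mulr_ge0 // ltW.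
  rewrite mulrDl. lra.
Qed.
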